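(* Let $\{\mathbb{G}_n,\ n=2,3,\ldots\}$ be a sequence of random graphs as described in the context, with $\lim_{n\to\infty}|V_n|=\infty$ (no homogeneity assumption). For each $n$, let $(\nu_n,\mu_n)$ be a random pair uniformly distributed over $\Sigma_n=\{(k,\ell)\in V_n\times V_n: k\ne\ell\}$, i.e. $\mathbb{P}[\nu_n=k,\mu_n=\ell]=\frac{1}{|V_n|(|V_n|-1)}$ for distinct $k,\ell\in V_n$, and independent of $\mathbb{G}_n$. Fix $d\in\{0,1,\ldots\}$. Then $P_n(d)\to L(d)$ in probability for some scalar $L(d)\in\mathbb{R}$ if and only if $$\lim_{n\to\infty}\mathbb{P}[D_{n,\nu_n}=d]=L(d)\quad\text{and}\quad\lim_{n\to\infty}\mathrm{Cov}\big[\mathbf{1}[D_{n,\nu_n}=d],\mathbf{1}[D_{n,\mu_n}=d]\big]=0.$$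
   Context: All random variables are defined on a common probability space $(\Omega,\mathcal{F},\mathbb{P})$. For each $n=2,3,\ldots$, $\mathbb{G}_n$ is a random (possibly directed, self-loops allowed) graph on a deterministic finite node set $V_n$ with $|V_n|\ge 2$, determined by $\{0,1\}$-valued edge random variables $\{\chi_n(k,\ell),\ k,\ell\in V_n\}$ ($\chi_n(k,\ell)=1$ iff there is an edge from $k$ to $\ell$). The degree of node $k$ is $D_{n,k}=\sum_{\ell\in V_n}\chi_n(k,\ell)$. For $d=0,1,\ldots$, $N_n(d)=\sum_{k\in V_n}\mathbf{1}[D_{n,k}=d]$ and $P_n(d)=N_n(d)/|V_n|$. *)

(* Defs.v *)
From HB Require Import structures.
From mathcomp Require Import all_boot all_order all_algebra.
From mathcomp Require Import all_classical all_reals all_analysis.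
Set Implicit Arguments. Unset Strict Implicit. Unset Printing Implicit Defensive.
Import Order.TTheory GRing.Theory Num.Theory.
Local Open Scope classical_set_scope.
Local Open Scope ring_scope.

(* Random graph on node set V : finType, given by edge indicators
   chi : Omega -> V -> V -> bool (chi w k l = edge from k to l). *)

Definition degree {Omega : Type} {V : finType} (chi : Omega -> V -> V -> bool)
  (w : Omega) (k : V) : nat := (\sum_(l : V) chi w k l)%N.

Definition Ncount {Omega : Type} {V : finType} (chi : Omega -> V -> V -> bool)
  (d : nat) (w : Omega) : nat := #|[set k : V | degree chi w k == d]|.

Definition Pfrac {R : realType} {Omega : Type} {V : finType}
  (chi : Omega -> V -> V -> bool) (d : nat) (w : Omega) : R :=
  (Ncount chi d w)%:R / #|V|%:R.

(* Independence of the random element (nu,mu) from the random graph chi,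
   both taking finitely many values: product rule on all atoms. *)
Definition indep_pair_graph {dO : measure_display} {Omega : measurableType dO}
  {R : realType} (P : probability Omega R) {V : finType}
  (chi : Omega -> V -> V -> bool) (nu mu : Omega -> V) : Prop :=
  forall (g : V -> V -> bool) (k l : V),
    P ([set w | chi w = g] `&` [set w | nu w = k /\ mu w = l]) =
    (P [set w | chi w = g] * P [set w | nu w = k /\ mu w = l])%E.

Definition cvg_in_prob {dO : measure_display} {Omega : measurableType dO}
  {R : realType} (P : probability Omega R) (X : nat -> Omega -> R) (c : R) : Prop :=
  forall eps : R, 0 < eps ->
    (fun n => P [set w | eps < `|X n w - c| ]) @ \oo --> 0%E.

(* Main.v *)
Require Import Defs.
From HB Require Import structures.
From mathcomp Require Import all_boot all_order all_algebra.
From mathcomp Require Import all_classical all_reals all_analysis.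
From mathcomp Require Import ring lra.
Import Order.TTheory GRing.Theory Num.Theory numFieldNormedType.Exports.
Local Open Scope classical_set_scope.
Local Open Scope ring_scope.
Section Abstract.
Variable R : realType.

Lemma sq_le_norm (x e : R) : 0 < e -> x ^+ 2 <= e ^+ 2 -> `|x| <= e.
Proof.
move=> e0 h; rewrite ler_norml; apply/andP; split; nra.
Qed.

Lemma abstract_cvg (a : R -> nat -> R) (m1 S Vv cv del : nat -> R) (L K : R) :
  0 < K ->
  (forall eps n, 0 <= a eps n) ->
  (forall eps n, 0 < eps -> (2 <= n)%N -> eps ^+ 2 * a eps n <= S n) ->
  (forall eps n, 0 < eps -> (2 <= n)%N -> S n <= eps ^+ 2 + K * a eps n) ->
  (forall n, (2 <= n)%N -> S n = Vv n + (m1 n - L) ^+ 2) ->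
  (forall n, (2 <= n)%N -> 0 <= Vv n) ->
  (forall n, (2 <= n)%N -> `|cv n - Vv n| <= del n) ->
  del @ \oo --> 0 ->
  (forall eps, 0 < eps -> a eps @ \oo --> 0) <-> (m1 @ \oo --> L /\ cv @ \oo --> 0).
Proof.
move=> K0 a0 h1 h2 h3 h4 h5 hdel.
have S0 n : (2 <= n)%N -> 0 <= S n.
  by move=> n2; rewrite h3 //; apply: addr_ge0; [exact: h4|exact: sqr_ge0].
have StoB : S @ \oo --> 0 -> m1 @ \oo --> L /\ cv @ \oo --> 0.
  move=> /cvgrPdist_le hS; split.
    apply/cvgrPdist_le => e e0.
    near=> n.
    have n2 : (2 <= n)%N by near: n; exact: nbhs_infty_ge.
    have hs : `|0 - S n| <= e ^+ 2 by near: n; apply: hS; exact: exprn_gt0.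
    rewrite distrC; apply: sq_le_norm => //.
    move: hs; rewrite sub0r normrN ger0_norm ?S0 // h3 // => hs.
    have := h4 n n2; lra.
  apply/cvgrPdist_le => e e0.
  move/cvgrPdist_le: hdel => hd.
  near=> n.
  have n2 : (2 <= n)%N by near: n; exact: nbhs_infty_ge.
  have hs : `|0 - S n| <= e / 2 by near: n; apply: hS; lra.
  have hd' : `|0 - del n| <= e / 2 by near: n; apply: hd; lra.
  move: hs hd'; rewrite !sub0r !normrN ger0_norm ?S0 // h3 // => hs hd'.
  have := h5 n n2; rewrite ler_norml => /andP[c1 c2].
  move: hd'; rewrite ler_norml => /andP[d1 d2].
  have q1 := h4 n n2; have q2 := sqr_ge0 (m1 n - L).
  rewrite ler_norml; apply/andP; split; lra.
have BtoS : m1 @ \oo --> L /\ cv @ \oo --> 0 -> S @ \oo --> 0.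
  case=> /cvgrPdist_le hm /cvgrPdist_le hc.
  move/cvgrPdist_le: hdel => hd.
  apply/cvgrPdist_le => e e0.
  pose f := Num.min 1 (e / 2).
  have f0 : 0 < f by rewrite lt_min ltr01 /=; lra.
  have f1 : f <= 1 by rewrite ge_min lexx.
  have f2 : f <= e / 2 by rewrite ge_min lexx orbT.
  near=> n.
  have n2 : (2 <= n)%N by near: n; exact: nbhs_infty_ge.
  have hm' : `|L - m1 n| <= f by near: n; apply: hm.
  have hc' : `|0 - cv n| <= e / 4 by near: n; apply: hc; lra.
  have hd' : `|0 - del n| <= e / 4 by near: n; apply: hd; lra.
  move: hc' hd'; rewrite !sub0r !normrN => hc' hd'.
  have := h5 n n2; have := h4 n n2. rewrite h3 //.
  have hsq : (m1 n - L) ^+ 2 <= e / 2.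
    move: hm'; rewrite distrC ler_norml => /andP[u1 u2].
    have : (m1 n - L) ^+ 2 <= f ^+ 2 by rewrite !expr2; nra.
    have : f ^+ 2 <= f by rewrite expr2; nra.
    lra.
  move: hsq; move: (m1 n - L) => x hsq.
  move: hc' hd'; rewrite !ler_norml => /andP[? ?] /andP[? ?] hv /andP[? ?].
  apply/andP; split; nra.
have StoA : S @ \oo --> 0 -> forall eps, 0 < eps -> a eps @ \oo --> 0.
  move=> /cvgrPdist_le hS eps eps0; apply/cvgrPdist_le => e e0.
  near=> n.
  have n2 : (2 <= n)%N by near: n; exact: nbhs_infty_ge.
  have hs : `|0 - S n| <= eps ^+ 2 * e.
    by near: n; apply: hS; apply: mulr_gt0 => //; exact: exprn_gt0.
  move: hs; rewrite !sub0r !normrN (ger0_norm (a0 eps n)) (ger0_norm (S0 n n2)) => hs.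
  have := h1 eps n eps0 n2.
  have ep2 : 0 < eps ^+ 2 by exact: exprn_gt0.
  move=> h; rewrite -(ler_pM2l ep2); lra.
have AtoS : (forall eps, 0 < eps -> a eps @ \oo --> 0) -> S @ \oo --> 0.
  move=> ha; apply/cvgrPdist_le => e e0.
  pose f := Num.min 1 (e / 2).
  have f0 : 0 < f by rewrite lt_min ltr01 /=; lra.
  have f1 : f <= 1 by rewrite ge_min lexx.
  have f2 : f <= e / 2 by rewrite ge_min lexx orbT.
  move/cvgrPdist_le: (ha f f0) => hf.
  near=> n.
  have n2 : (2 <= n)%N by near: n; exact: nbhs_infty_ge.
  have hs : `|0 - a f n| <= e / 2 / K.
    by near: n; apply: hf; apply: divr_gt0 => //; lra.
  move: hs; rewrite sub0r normrN ger0_norm ?a0 // => hs.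
  have hK : K * a f n <= e / 2.
    by rewrite -ler_pdivlMl // mulrC.
  have := h2 f n f0 n2.
  rewrite sub0r normrN ger0_norm ?S0 //.
  have : f ^+ 2 <= f by rewrite expr2; nra.
  lra.
split.
  by move=> /AtoS /StoB.
by move=> /BtoS /StoA.
Unshelve. all: by end_near.
Qed.

End Abstract.
Section Part.
Context d0 (T : measurableType d0) (R : realType) (P : probability T R).

Lemma mem_meas (G : eqType) (f : T -> G) :
  (forall g, measurable [set w | f w = g]) ->
  forall s : seq G, measurable [set w | f w \in s].
Proof.
move=> mf; elim=> [|g s IH].
  by rewrite (_ : [set w | _] = set0) //; apply/seteqP; split=> w //=; rewrite in_nil.
rewrite (_ : [set w | _] = [set w | f w = g] `|` [set w | f w \in s]).
  exact: measurableU.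
apply/seteqP; split=> w /=; rewrite in_cons.
  by move=> /orP[/eqP ->|ws]; [left|right].
by case=> [->|->]; rewrite ?eqxx ?orbT.
Qed.

Lemma part_seq (G : eqType) (f : T -> G) :
  (forall g, measurable [set w | f w = g]) ->
  forall s : seq G, uniq s ->
  P [set w | f w \in s] = (\sum_(g <- s) P [set w | f w = g])%E.
Proof.
move=> mf; elim=> [|g s IH].
  move=> _; rewrite big_nil (_ : [set w | _] = set0) //.
  by apply/seteqP; split=> w //=; rewrite in_nil.
move=> /= /andP[gs us]; rewrite big_cons -IH //.
rewrite (_ : [set w | _] = [set w | f w = g] `|` [set w | f w \in s]).
  rewrite measureU //; first exact: mem_meas.
  apply/seteqP; split=> w //= [-> ]; by rewrite (negbTE gs).
apply/seteqP; split=> w /=; rewrite in_cons.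
  by move=> /orP[/eqP ->|ws]; [left|right].
by case=> [->|->]; rewrite ?eqxx ?orbT.
Qed.

Lemma part_fin (G : finType) (f : T -> G) (Q : pred G) :
  (forall g, measurable [set w | f w = g]) ->
  P [set w | Q (f w)] = (\sum_(g | Q g) P [set w | f w = g])%E.
Proof.
move=> mf.
rewrite (_ : [set w | Q (f w)] = [set w | f w \in [seq g <- index_enum G | Q g]]).
  by rewrite part_seq // ?filter_uniq ?index_enum_uniq // big_filter.
by apply/seteqP; split=> w /=; rewrite mem_filter mem_index_enum andbT.
Qed.

Lemma part_fin_meas (G : finType) (f : T -> G) (Q : pred G) :
  (forall g, measurable [set w | f w = g]) ->
  measurable [set w | Q (f w)].
Proof.
move=> mf.
rewrite (_ : [set w | Q (f w)] = [set w | f w \in [seq g <- index_enum G | Q g]]).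
  exact: mem_meas.
by apply/seteqP; split=> w /=; rewrite mem_filter mem_index_enum andbT.
Qed.

End Part.
Lemma offdiag (R : realType) (V : finType) (a b : V -> R) :
  \sum_(kl : V * V) a kl.1 * b kl.2 * (kl.1 != kl.2)%:R =
  (\sum_k a k) * (\sum_l b l) - \sum_k a k * b k.
Proof.
rewrite -(pair_bigA _ (fun k l => a k * b l * (k != l)%:R)) /= big_distrl /= -sumrB.
apply: eq_bigr => k _; rewrite big_distrr /= (bigD1 k) //= eqxx mulr0 add0r.
rewrite [in RHS](bigD1 k) //= addrAC subrr add0r.
by apply: eq_bigr => l lk; rewrite eq_sym lk mulr1.
Qed.

Section PerN.
Context d0 (T : measurableType d0) (R : realType) (P : probability T R).
Variable (V : finType) (chi : T -> V -> V -> bool) (nu mu : T -> V).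
Hypothesis hchi : forall k l, measurable [set w | chi w k l].
Hypothesis hnu : forall k, measurable [set w | nu w = k].
Hypothesis hmu : forall l, measurable [set w | mu w = l].

Lemma all_meas (I : eqType) (h : I -> set T) : (forall i, measurable (h i)) ->
  forall s : seq I, measurable [set w | forall i, i \in s -> h i w].
Proof.
move=> mh; elim=> [|i s IH].
  by rewrite (_ : [set w | _] = setT) //; apply/seteqP; split=> w //= _ i; rewrite in_nil.
rewrite (_ : [set w | _] = h i `&` [set w | forall j, j \in s -> h j w]).
  exact: measurableI.
apply/seteqP; split=> w /=.
  by move=> H; split; [apply: H; rewrite in_cons eqxx|move=> j js; apply: H; rewrite in_cons js orbT].
by case=> hi H j; rewrite in_cons => /orP[/eqP ->|/H].
Qed.

Definition gof (w : T) : {ffun V * V -> bool} := [ffun p => chi w p.1 p.2].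

Lemma gof_meas g : measurable [set w | gof w = g].
Proof.
rewrite (_ : [set w | gof w = g] =
   [set w | forall p, p \in index_enum (prod V V) -> [set w | chi w p.1 p.2 = g p] w]).
  apply: all_meas => p; case: (g p); first exact: hchi.
  rewrite (_ : [set w | _] = ~` [set w | chi w p.1 p.2]); first exact: measurableC.
  by apply/seteqP; split=> w /=; [move=> ->|move/negP/negbTE].
apply/seteqP; split=> w /=.
  by move=> <- p _; rewrite ffunE.
by move=> H; apply/ffunP => p; rewrite ffunE; apply: H; rewrite mem_index_enum.
Qed.


Definition pr (kl : V * V) : set T := [set w | nu w = kl.1 /\ mu w = kl.2].
Lemma pr_meas kl : measurable (pr kl).
Proof. rewrite (_ : pr kl = [set w | nu w = kl.1] `&` [set w | mu w = kl.2]) //; exact: measurableI. Qed.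

Definition qq (g : {ffun V * V -> bool}) : R := fine (P [set w | gof w = g]).
Definition rr (kl : V * V) : R := fine (P (pr kl)).

Lemma qq_ge0 g : 0 <= qq g.
Proof. by rewrite /qq fine_ge0. Qed.
Lemma rr_ge0 kl : 0 <= rr kl.
Proof. by rewrite /rr fine_ge0. Qed.

Lemma PfinE (A : set T) : measurable A -> P A = (fine (P A))%:E.
Proof. by move=> mA; rewrite fineK //; exact: fin_num_measure. Qed.

Lemma sum_qq : \sum_g qq g = 1.
Proof.
have := @part_fin _ _ _ P _ gof (fun _ => true) gof_meas.
rewrite [X in P X = _](_ : _ = setT) ?probability_setT; last by apply/seteqP; split.
rewrite (eq_bigr (fun g => (qq g)%:E)); last by move=> g _; rewrite -PfinE //; exact: gof_meas.
by rewrite sumEFin => -[].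
Qed.

Lemma sum_rr : \sum_kl rr kl = 1.
Proof.
have mf : forall kl, measurable [set w | (nu w, mu w) = kl].
  move=> kl; rewrite (_ : [set w | _] = pr kl); first exact: pr_meas.
  by apply/seteqP; split=> w /=; [by move=> <-|case: kl => k l /= [-> ->]].
have := @part_fin _ _ _ P _ _ (fun _ => true) mf.
rewrite [X in P X = _](_ : _ = setT) ?probability_setT; last by apply/seteqP; split.
rewrite (eq_bigr (fun kl => (rr kl)%:E)); last first.
  move=> kl _; rewrite (_ : [set w | _] = pr kl) -?PfinE //; first exact: pr_meas.
  by apply/seteqP; split=> w /=; [by move=> <-|case: kl => k l /= [-> ->]].
by rewrite sumEFin => -[].
Qed.

Hypothesis hN2 : (2 <= #|V|)%N.
Hypothesis hunif : forall k l : V, k != l ->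
     P [set w | nu w = k /\ mu w = l] =
       ((#|V|%:R * (#|V|%:R - 1))^-1 : R)%:E.
Hypothesis hindep : indep_pair_graph P chi nu mu.

Definition uu : R := (#|V|%:R * (#|V|%:R - 1))^-1.

Lemma N2 : 2 <= (#|V|%:R : R).
Proof. by rewrite ler_nat. Qed.

Lemma rr_eq kl : rr kl = (kl.1 != kl.2)%:R * uu.
Proof.
have off : \sum_(kl : V * V) (kl.1 != kl.2)%:R * uu = 1.
  rewrite -mulr_suml.
  transitivity ((\sum_(p : V * V) (fun _ : V => (1:R)) p.1 * (fun _ : V => (1:R)) p.2 * (p.1 != p.2)%:R) * uu).
    by congr (_ * _); apply: eq_bigr => p _; rewrite !mul1r.
  rewrite (@offdiag R V (fun _ : V => (1:R)) (fun _ => 1)) /= (eq_bigr (fun _ => 1 : R) (fun i _ => mulr1 (1:R))).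
  rewrite sumr_const /uu.
  have hN := N2.
  by field; apply/andP; split; apply/eqP; lra.
have split_rr p : rr p = (p.1 != p.2)%:R * uu + (p.1 == p.2)%:R * rr p.
  case: p => k l /=; case: eqP => [->|/eqP kl0]; rewrite ?mul0r ?mul1r ?add0r ?addr0 //.
  by rewrite /rr /pr hunif.
have : \sum_(p : V * V) (p.1 == p.2)%:R * rr p = 0.
  have := sum_rr; rewrite (eq_bigr _ (fun p _ => split_rr p)) big_split /= off.
  by move=> h; lra.
move=> /psumr_eq0P H; rewrite split_rr; case: kl H => k l /= H.
case: eqP => [e|ne]; last by rewrite mul0r addr0.
have := H (fun i _ => mulr_ge0 (ler0n _ _) (rr_ge0 i)) (k, l) isT; rewrite /= e eqxx mul1r => ->.
by rewrite addr0.
Qed.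


Lemma atom g kl : P ([set w | gof w = g] `&` pr kl) = (qq g * rr kl)%:E.
Proof.
have := hindep (fun k l => g (k, l)) kl.1 kl.2.
rewrite (_ : [set w | chi w = _] = [set w | gof w = g]); last first.
  apply/seteqP; split=> w /=.
    by move=> h; apply/ffunP=> -[k l]; rewrite ffunE /= h.
  by move=> <-; apply/funext => k; apply/funext => l; rewrite ffunE.
move=> ->; rewrite /qq /rr EFinM -!PfinE //; first [exact: gof_meas|exact: pr_meas].
Qed.

Lemma expand (Q : {ffun V * V -> bool} -> V -> V -> bool) :
  P [set w | Q (gof w) (nu w) (mu w)] =
  (\sum_g \sum_(kl : V * V | Q g kl.1 kl.2) qq g * rr kl)%:E.
Proof.
pose F w := (gof w, (nu w, mu w)).
have fib x : [set w | F w = x] = [set w | gof w = x.1] `&` pr x.2.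
  case: x => g [k l]; rewrite /pr /F; apply/seteqP; split=> w /=.
    by case=> -> -> ->.
  by case=> -> [-> ->].
have mF x : measurable [set w | F w = x].
  by rewrite fib; apply: measurableI; [exact: gof_meas|exact: pr_meas].
transitivity (\sum_(x | Q x.1 x.2.1 x.2.2) P [set w | F w = x])%E.
  exact: (@part_fin _ _ _ P _ F (fun x => Q x.1 x.2.1 x.2.2) mF).
rewrite (eq_bigr (fun x => (qq x.1 * rr x.2)%:E)); last by move=> x _; rewrite fib atom.
rewrite sumEFin pair_big_dep /=.
by congr (_%:E); apply: eq_bigl => x.
Qed.


Variable d : nat.

Definition degG (g : {ffun V * V -> bool}) (k : V) : nat := (\sum_l g (k, l))%N.
Definition Nc (g : {ffun V * V -> bool}) : nat := #|[set k | degG g k == d]|.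
Definition XX g : R := (Nc g)%:R / #|V|%:R.
Definition CC g : R := (Nc g)%:R * ((Nc g)%:R - 1) * uu.

Lemma degE w k : degree chi w k = degG (gof w) k.
Proof. by rewrite /degree /degG; apply: eq_bigr => l _; rewrite ffunE. Qed.

Lemma Nc_sum g : (Nc g)%:R = \sum_k ((degG g k == d)%:R : R).
Proof.
rewrite /Nc -sum1_card natr_sum big_mkcond /=; apply: eq_bigr => k _.
have -> : (k \in [set k0 | degG g k0 == d]) = (degG g k == d).
  by apply/idP/idP => [/set_mem|H]; [done|exact: mem_set].
by case: (_ == _).
Qed.

Lemma sum_rr2 (a b : V -> bool) :
  \sum_(kl : V * V | a kl.1 && b kl.2) rr kl =
  uu * ((\sum_k ((a k)%:R : R)) * (\sum_l ((b l)%:R : R)) - \sum_k (a k)%:R * (b k)%:R).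
Proof.
rewrite -(@offdiag R V (fun k => (a k)%:R) (fun l => (b l)%:R)) mulr_sumr big_mkcond /=.
apply: eq_bigr => -[k l] _ /=; rewrite rr_eq /=.
by case: (a k); case: (b l) => /=; rewrite ?mul1r ?mul0r ?mulr0 // mulrC.
Qed.

Lemma PDnu : P [set w | degree chi w (nu w) = d] = (\sum_g qq g * XX g)%:E.
Proof.
rewrite (_ : [set w | _] = [set w | (degG (gof w) (nu w) == d) && true]); last first.
  by apply/seteqP; split=> w /=; rewrite degE andbT; [move=> ->|move/eqP].
rewrite (expand (fun g k l => (degG g k == d) && true)); congr (_%:E); apply: eq_bigr => g _.
rewrite -mulr_sumr (sum_rr2 (fun k => degG g k == d) (fun _ => true)) -Nc_sum.
rewrite (_ : (true%:R : R) = 1) //.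
rewrite [X in _ - X](eq_bigr (fun k => ((degG g k == d)%:R : R))); last by move=> k _; rewrite mulr1.
rewrite -Nc_sum sumr_const /XX /uu; have hN := N2.
congr (_ * _); field; apply/andP; split; apply/eqP; lra.
Qed.


Lemma PDmu : P [set w | degree chi w (mu w) = d] = (\sum_g qq g * XX g)%:E.
Proof.
rewrite (_ : [set w | _] = [set w | true && (degG (gof w) (mu w) == d)]); last first.
  by apply/seteqP; split=> w /=; rewrite degE; [move=> ->|move/eqP].
rewrite (expand (fun g k l => true && (degG g l == d))); congr (_%:E); apply: eq_bigr => g _.
rewrite -mulr_sumr (sum_rr2 (fun _ => true) (fun k => degG g k == d)) -Nc_sum.
rewrite (_ : (true%:R : R) = 1) //.
rewrite [X in _ - X](eq_bigr (fun k => ((degG g k == d)%:R : R))); last by move=> k _; rewrite mul1r.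
rewrite -Nc_sum sumr_const /XX /uu; have hN := N2.
congr (_ * _); field; apply/andP; split; apply/eqP; lra.
Qed.

Lemma PDboth : P ([set w | degree chi w (nu w) = d] `&` [set w | degree chi w (mu w) = d])
  = (\sum_g qq g * CC g)%:E.
Proof.
rewrite (_ : _ `&` _ = [set w | (degG (gof w) (nu w) == d) && (degG (gof w) (mu w) == d)]); last first.
  apply/seteqP; split=> w /=; rewrite !degE; first by case=> -> ->; rewrite eqxx.
  by case/andP=> /eqP -> /eqP ->.
rewrite (expand (fun g k l => (degG g k == d) && (degG g l == d))); congr (_%:E); apply: eq_bigr => g _.
rewrite -mulr_sumr (sum_rr2 (fun k => degG g k == d) (fun k => degG g k == d)) -Nc_sum.
rewrite [X in _ - X](eq_bigr (fun k => ((degG g k == d)%:R : R))); last first.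
  by move=> k _; case: (_ == _); rewrite ?mulr1 ?mulr0.
rewrite -Nc_sum /CC; ring.
Qed.

Lemma PfracE w : Pfrac chi d w = XX (gof w).
Proof.
rewrite /Pfrac /Ncount /XX /Nc; congr (_%:R / _); apply: eq_card => k.
rewrite !unfold_in /= degE //.
Qed.


Variable L : R.

Lemma Peps (eps : R) : P [set w | eps < `|Pfrac chi d w - L|] =
  (\sum_g qq g * ((eps < `|XX g - L|)%R)%:R)%:E.
Proof.
transitivity (\sum_(g | (eps < `|XX g - L|)%R) P [set w | gof w = g])%E.
  rewrite -(@part_fin _ _ _ P _ gof (fun g => eps < `|XX g - L|) gof_meas).
  by congr (P _); apply/seteqP; split=> w /=; rewrite PfracE.
rewrite (eq_bigr (fun g => (qq g)%:E)); last by move=> g _; rewrite -PfinE //; exact: gof_meas.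
rewrite sumEFin big_mkcond /=; congr (_%:E); apply: eq_bigr => g _.
by case: ifP; rewrite ?mulr1 ?mulr0.
Qed.

Lemma measQ (Q : {ffun V * V -> bool} -> V -> V -> bool) :
  measurable [set w | Q (gof w) (nu w) (mu w)].
Proof.
pose F w := (gof w, (nu w, mu w)).
have fib x : [set w | F w = x] = [set w | gof w = x.1] `&` pr x.2.
  case: x => g [k l]; rewrite /pr /F; apply/seteqP; split=> w /=.
    by case=> -> -> ->.
  by case=> -> [-> ->].
have mF x : measurable [set w | F w = x].
  by rewrite fib; apply: measurableI; [exact: gof_meas|exact: pr_meas].
exact: (@part_fin_meas _ _ _ F (fun x => Q x.1 x.2.1 x.2.2) mF).
Qed.

Lemma meas_Dnu : measurable [set w | degree chi w (nu w) = d].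
Proof.
rewrite (_ : [set w | _] = [set w | (degG (gof w) (nu w) == d) && true]); last first.
  by apply/seteqP; split=> w /=; rewrite degE andbT; [move=> ->|move/eqP].
exact: (measQ (fun g k l => (degG g k == d) && true)).
Qed.

Lemma meas_Dmu : measurable [set w | degree chi w (mu w) = d].
Proof.
rewrite (_ : [set w | _] = [set w | (degG (gof w) (mu w) == d) && true]); last first.
  by apply/seteqP; split=> w /=; rewrite degE andbT; [move=> ->|move/eqP].
exact: (measQ (fun g k l => (degG g l == d) && true)).
Qed.

Lemma cov_indic (A B : set T) : measurable A -> measurable B ->
  covariance P (\1_A : T -> R) (\1_B : T -> R) = (P (A `&` B) - P A * P B)%E.
Proof.
move=> mA mB.
have LA C : measurable C -> (\1_C : T -> R) \in Lfun P 1.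
  by move=> mC; apply/Lfun1_integrable; exact: integrable_indic.
have E : ((\1_A : T -> R) * \1_B)%R = \1_(A `&` B).
  by apply/funext => x; rewrite indicI.
rewrite covarianceE ?LA // ?E ?LA //; last exact: measurableI.
by rewrite !expectation_indic //; exact: measurableI.
Qed.

Lemma covE : covariance P (\1_[set w | degree chi w (nu w) = d] : T -> R)
         (\1_[set w | degree chi w (mu w) = d] : T -> R) =
  ((\sum_g qq g * CC g) - (\sum_g qq g * XX g) ^+ 2)%:E.
Proof.
rewrite cov_indic; [|exact: meas_Dnu|exact: meas_Dmu]. have H := PDboth.
rewrite PDnu.
rewrite PDmu.
by rewrite H -EFinM -EFinB expr2.
Qed.


Definition m1 := \sum_g qq g * XX g.
Definition M2 := \sum_g qq g * XX g ^+ 2.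
Definition c2 := \sum_g qq g * CC g.
Definition Sd := \sum_g qq g * (XX g - L) ^+ 2.
Definition Vd := M2 - m1 ^+ 2.
Definition aa (eps : R) := \sum_g qq g * ((eps < `|XX g - L|)%R)%:R.

Lemma XX01 g : 0 <= XX g <= 1.
Proof.
have hN := N2; rewrite /XX; apply/andP; split.
  by apply: divr_ge0; apply: ler0n.
rewrite ler_pdivrMr ?mul1r ?ler_nat ?max_card //; lra.
Qed.

Lemma sum_sq c : \sum_g qq g * (XX g - c) ^+ 2 = M2 - 2 * c * m1 + c ^+ 2.
Proof.
rewrite (eq_bigr (fun g => qq g * XX g ^+ 2 - (2 * c) * (qq g * XX g) + c ^+ 2 * qq g)); last first.
  by move=> g _; ring.
rewrite big_split /= sumrB -!mulr_sumr sum_qq /M2 /m1; ring.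
Qed.

Lemma R1 eps : 0 < eps -> eps ^+ 2 * aa eps <= Sd.
Proof.
move=> e0; rewrite /aa /Sd mulr_sumr; apply: ler_sum => g _.
rewrite mulrCA; apply: ler_wpM2l; first exact: qq_ge0.
case: (boolP (eps < _)) => h /=; last by rewrite mulr0 sqr_ge0.
rewrite mulr1 -(real_normK (num_real (XX g - L))).
have := normr_ge0 (XX g - L); move: h; move: `|XX g - L| => y h h0.
rewrite !expr2; apply: ltW; rewrite -subr_gt0 (_ : y * y - eps * eps = (y - eps) * (y + eps)); last by ring.
apply: mulr_gt0; lra.
Qed.

Lemma R2 eps : 0 < eps -> Sd <= eps ^+ 2 + (1 + `|L|) ^+ 2 * aa eps.
Proof.
move=> e0.
apply: (le_trans (y := \sum_g qq g * (eps ^+ 2 + (1 + `|L|) ^+ 2 * ((eps < `|XX g - L|)%R)%:R))).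
  apply: ler_sum => g _; apply: ler_wpM2l; first exact: qq_ge0.
  have := XX01 g => /andP[x0 x1].
  have hn := ler_normB (XX g) L.
  rewrite (ger0_norm x0) in hn.
  have hL := normr_ge0 L.
  rewrite -(real_normK (num_real (XX g - L))).
  have := normr_ge0 (XX g - L).
  case: (boolP (eps < _)) => h /=; move: h hn; move: `|XX g - L| => y h hn h0.
    rewrite mulr1 !expr2; nra.
  rewrite mulr0 addr0 !expr2; move: h; rewrite -leNgt => h; nra.
rewrite (eq_bigr (fun g => eps ^+ 2 * qq g + (1 + `|L|) ^+ 2 * (qq g * ((eps < `|XX g - L|)%R)%:R))); last first.
  by move=> g _; ring.
by rewrite big_split /= -!mulr_sumr sum_qq mulr1.
Qed.

Lemma R3 : Sd = Vd + (m1 - L) ^+ 2.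
Proof. rewrite /Sd sum_sq /Vd; ring. Qed.

Lemma R4 : 0 <= Vd.
Proof.
have h0 : 0 <= \sum_g qq g * (XX g - m1) ^+ 2.
  by apply: sumr_ge0 => g _; apply: mulr_ge0; [exact: qq_ge0|exact: sqr_ge0].
rewrite sum_sq in h0.
have -> : Vd = M2 - 2 * m1 * m1 + m1 ^+ 2 by rewrite /Vd; ring.
exact: h0.
Qed.

Lemma R5 : `|(c2 - m1 ^+ 2) - Vd| <= (#|V|%:R - 1)^-1.
Proof.
have hN := N2.
have -> : c2 - m1 ^+ 2 - Vd = c2 - M2 by rewrite /Vd; ring.
rewrite /c2 /M2 -sumrB.
apply: (le_trans (ler_norm_sum _ _ _)).
apply: (le_trans (y := \sum_g qq g * (#|V|%:R - 1)^-1)); last first.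
  by rewrite -mulr_suml sum_qq mul1r.
apply: ler_sum => g _; rewrite -mulrBr normrM (ger0_norm (qq_ge0 g)).
apply: ler_wpM2l; first exact: qq_ge0.
have -> : CC g - XX g ^+ 2 = (XX g ^+ 2 - XX g) * (#|V|%:R - 1)^-1.
  rewrite /CC /XX /uu; field; apply/andP; split; apply/eqP; lra.
have := XX01 g => /andP[x0 x1].
have dp : 0 < (#|V|%:R - 1 : R)^-1 by rewrite invr_gt0; lra.
move: dp; move: (#|V|%:R - 1 : R)^-1 => del dp.
have t0 : 0 <= XX g - XX g * XX g by nra.
have t1 : XX g - XX g * XX g <= 1 by nra.
rewrite expr2 (_ : (XX g * XX g - XX g) * del = - ((XX g - XX g * XX g) * del)); last by ring.
move: t0 t1; move: (XX g - XX g * XX g) => t t0 t1.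
rewrite normrN ler_norml; apply/andP; split; nra.
Qed.

End PerN.
Lemma cvgE_fin (R : realType) (f : nat -> \bar R) (l : R) :
  (\forall n \near \oo, f n \is a fin_num) ->
  (f @ \oo --> l%:E <-> (fun n => fine (f n)) @ \oo --> l).
Proof.
move=> h; split; first by move/fine_cvgP => [].
by move=> H; apply/fine_cvgP; split.
Qed.

Theorem proposition4 (dO : measure_display) (Omega : measurableType dO)
  (R : realType) (P : probability Omega R)
  (V : nat -> finType)
  (chi : forall n, Omega -> V n -> V n -> bool)
  (nu mu : forall n, Omega -> V n)
  (hV2 : forall n, (2 <= n)%N -> (2 <= #|V n|)%N)
  (hVinf : (fun n => (#|V n|%:R : R)) @ \oo --> +oo)
  (hchi_meas : forall n k l, measurable [set w | chi n w k l])
  (hnu_meas : forall n k, measurable [set w | nu n w = k])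
  (hmu_meas : forall n l, measurable [set w | mu n w = l])
  (hunif : forall n, (2 <= n)%N -> forall k l : V n, k != l ->
     P [set w | nu n w = k /\ mu n w = l] =
       ((#|V n|%:R * (#|V n|%:R - 1))^-1 : R)%:E)
  (hindep : forall n, (2 <= n)%N -> indep_pair_graph P (chi n) (nu n) (mu n))
  (d : nat) (L : R) :
  cvg_in_prob P (fun n => Pfrac (chi n) d) L <->
  ((fun n => P [set w | degree (chi n) w (nu n w) = d]) @ \oo --> L%:E
   /\ (fun n => covariance P
         (\1_[set w | degree (chi n) w (nu n w) = d] : Omega -> R)
         (\1_[set w | degree (chi n) w (mu n w) = d] : Omega -> R)) @ \oo --> 0%E).
Proof.
pose a (eps : R) n := fine (P [set w | eps < `|Pfrac (chi n) d w - L|]).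
pose m n := fine (P [set w | degree (chi n) w (nu n w) = d]).
pose cv n := fine (covariance P
         (\1_[set w | degree (chi n) w (nu n w) = d] : Omega -> R)
         (\1_[set w | degree (chi n) w (mu n w) = d] : Omega -> R)).
pose S n := @Sd _ _ _ P _ (chi n) d L.
pose Vv n := @Vd _ _ _ P _ (chi n) d.
pose del n := (#|V n|%:R - 1 : R)^-1.
have Ea eps n : a eps n = @aa _ _ _ P _ (chi n) d L eps by rewrite /a (@Peps _ _ _ _ _ _ (hchi_meas n)).
have Em n : (2 <= n)%N -> m n = @m1 _ _ _ P _ (chi n) d.
  by move=> n2; rewrite /m (@PDnu _ _ _ _ _ _ _ _ (hchi_meas n) (hnu_meas n) (hmu_meas n) (hV2 n n2) (hunif n n2) (hindep n n2)).
have Ec n : (2 <= n)%N -> cv n = @c2 _ _ _ P _ (chi n) d - @m1 _ _ _ P _ (chi n) d ^+ 2.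
  by move=> n2; rewrite /cv (@covE _ _ _ _ _ _ _ _ (hchi_meas n) (hnu_meas n) (hmu_meas n) (hV2 n n2) (hunif n n2) (hindep n n2)).
have hdel : del @ \oo --> 0.
  apply/cvgrPdist_le => e e0.
  move/cvgryPge: hVinf => hV.
  near=> n.
  have hn : e^-1 + 1 <= #|V n|%:R by near: n; exact: hV.
  have ei : 0 < e^-1 by rewrite invr_gt0.
  have p : 0 < (#|V n|%:R : R) - 1 by lra.
  rewrite sub0r normrN /del ger0_norm; last by rewrite invr_ge0 ltW.
  rewrite -[X in X <= _]mul1r ler_pdivrMr //.
  have := mulfV (lt0r_neq0 e0); nra.
have key := @abstract_cvg R a m S Vv cv del L ((1 + `|L|) ^+ 2).
have key' : (forall eps, 0 < eps -> a eps @ \oo --> 0) <-> (m @ \oo --> L /\ cv @ \oo --> 0).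
  apply: key.
  - by apply: exprn_gt0; have := normr_ge0 L; lra.
  - by move=> eps n; rewrite /a fine_ge0.
  - by move=> eps n e0 n2; rewrite Ea; apply: R1.
  - by move=> eps n e0 n2; rewrite Ea; apply: (@R2 _ _ _ _ _ _ (hchi_meas n) (hV2 n n2)).
  - by move=> n n2; rewrite /S Em //; apply: (@R3 _ _ _ _ _ _ (hchi_meas n)).
  - by move=> n n2; apply: (@R4 _ _ _ _ _ _ (hchi_meas n)).
  - by move=> n n2; rewrite Ec //; apply: (@R5 _ _ _ _ _ _ (hchi_meas n) (hV2 n n2)).
  - exact: hdel.
have nn := nbhs_infty_ge 2.
have finA eps : \forall n \near \oo, P [set w | eps < `|Pfrac (chi n) d w - L|] \is a fin_num.
  by apply: filterS nn => n n2; rewrite (@Peps _ _ _ _ _ _ (hchi_meas n)).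
have finD : \forall n \near \oo, P [set w | degree (chi n) w (nu n w) = d] \is a fin_num.
  by apply: filterS nn => n n2; rewrite (@PDnu _ _ _ _ _ _ _ _ (hchi_meas n) (hnu_meas n) (hmu_meas n) (hV2 n n2) (hunif n n2) (hindep n n2)).
have finC : \forall n \near \oo, covariance P
         (\1_[set w | degree (chi n) w (nu n w) = d] : Omega -> R)
         (\1_[set w | degree (chi n) w (mu n w) = d] : Omega -> R) \is a fin_num.
  by apply: filterS nn => n n2; rewrite (@covE _ _ _ _ _ _ _ _ (hchi_meas n) (hnu_meas n) (hmu_meas n) (hV2 n n2) (hunif n n2) (hindep n n2)).
split.
  move=> H.
  have [h1 h2] : m @ \oo --> L /\ cv @ \oo --> 0.
    by apply/key' => eps e0; apply/(@cvgE_fin _ _ _ (finA eps)); exact: H.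
  by split; [apply/(@cvgE_fin _ _ _ finD)|apply/(@cvgE_fin _ _ _ finC)].
move=> [h1 h2] eps e0.
have H : forall eps, 0 < eps -> a eps @ \oo --> 0.
  by apply/key'; split; [apply/(@cvgE_fin _ _ _ finD)|apply/(@cvgE_fin _ _ _ finC)].
by apply/(@cvgE_fin _ _ _ (finA eps)); exact: H.
Unshelve. all: by end_near.
Qed.
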